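(* For all constants $c_1,c_2>0$ and every constant $\epsilon>0$ there is a constant $K$ such that the following holds for all $n\ge 3$: every $B_2$-circuit with $n$ inputs, size at most $c_1 n$ and depth at most $c_2\log n$ computing a function $f:\{0,1\}^n\to\{0,1\}$ can be converted into a nondeterministic formula computing $f$ with $n$ actual inputs, at most $K n/\log\log n$ guess inputs, and size at most $K n^{1+\epsilon}$.
   Context: A circuit is a directed acyclic graph whose in-degree-0 nodes (inputs) are each labeled by a variable or a constant $0$ or $1$, whose other nodes (gates) are each labeled by a Boolean function, with one designated output node. $B_2$ is the set of all Boolean functions $\{0,1\}^2\to\{0,1\}$; a $B_2$-circuit is a circuit whose gates have fan-in $2$ and are labeled by functions in $B_2$. A formula is a circuit in which every node has fan-out at most $1$ (here with fan-in-$2$ gates labeled by functions in $B_2$). A nondeterministic circuit (resp. formula) has actual inputs $x\in\{0,1\}^n$ and guess inputs $y\in\{0,1\}^m$ and computes $f$ where $f(x)=1$ iff there exists $y$ making the output $1$. Size is the number of gates; depth is the length of the longest path from an input to the output. *)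

(* Defs.v *)
From Stdlib Require Import Reals List Arith Lia.
Import ListNotations.
Open Scope R_scope.

Definition B2 := bool -> bool -> bool.

Inductive leaf : Type :=
| LVar (i : nat)
| LConst (b : bool).

(** ** B_2-circuits, as straight-line programs (topologically ordered gates). *)

Inductive node : Type :=
| NIn (l : leaf)
| NGate (k : nat).

Record circuit : Type := Circuit {
  gates : list (B2 * node * node);
  output : node
}.

(** Well-formedness for a circuit with n inputs x_0..x_{n-1}: every variable
    index is < n, and gate k only reads input nodes and gates j < k (acyclicity). *)
Definition node_ok (n bound : nat) (v : node) : Prop :=
  match v with
  | NIn (LVar i) => (i < n)%nat
  | NIn (LConst _) => True
  | NGate j => (j < bound)%nat
  end.

Definition circuit_wf (n : nat) (C : circuit) : Prop :=
  (forall k g a b, nth_error (gates C) k = Some (g, a, b) ->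
     node_ok n k a /\ node_ok n k b) /\
  node_ok n (length (gates C)) (output C).

Definition leaf_val (x : nat -> bool) (l : leaf) : bool :=
  match l with LVar i => x i | LConst b => b end.

Definition node_val (x : nat -> bool) (vals : list bool) (v : node) : bool :=
  match v with
  | NIn l => leaf_val x l
  | NGate k => nth k vals false
  end.

Fixpoint gate_vals_aux (x : nat -> bool) (gs : list (B2 * node * node))
  (acc : list bool) : list bool :=
  match gs with
  | [] => acc
  | (g, a, b) :: gs' =>
      gate_vals_aux x gs' (acc ++ [g (node_val x acc a) (node_val x acc b)])
  end.

Definition circuit_eval (C : circuit) (x : nat -> bool) : bool :=
  node_val x (gate_vals_aux x (gates C) []) (output C).

Definition node_depth (ds : list nat) (v : node) : nat :=
  match v with
  | NIn _ => 0%nat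
  | NGate k => nth k ds 0%nat
  end.

Fixpoint gate_depths_aux (gs : list (B2 * node * node)) (acc : list nat) : list nat :=
  match gs with
  | [] => acc
  | (_, a, b) :: gs' =>
      gate_depths_aux gs' (acc ++ [S (Nat.max (node_depth acc a) (node_depth acc b))])
  end.

Definition circuit_depth (C : circuit) : nat :=
  node_depth (gate_depths_aux (gates C) []) (output C).

Definition circuit_size (C : circuit) : nat := length (gates C).

(** C computes f : {0,1}^n -> {0,1} (inputs encoded as nat -> bool; only the
    first n coordinates matter for a well-formed circuit with n inputs). *)
Definition circuit_computes (C : circuit) (f : (nat -> bool) -> bool) : Prop :=
  forall x, circuit_eval C x = f x.

(** ** Nondeterministic formulas (fan-out <= 1, i.e. trees, fan-in-2 B_2 gates). *)

Inductive nleaf : Type :=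
| Actual (i : nat)
| Guess (j : nat)
| NConst (b : bool).

Inductive formula : Type :=
| FLeaf (l : nleaf)
| FGate (g : B2) (a b : formula).

Fixpoint formula_size (F : formula) : nat :=
  match F with
  | FLeaf _ => 0%nat
  | FGate _ a b => S (formula_size a + formula_size b)
  end.

Fixpoint formula_eval (F : formula) (x y : nat -> bool) : bool :=
  match F with
  | FLeaf (Actual i) => x i
  | FLeaf (Guess j) => y j
  | FLeaf (NConst b) => b
  | FGate g a b => g (formula_eval a x y) (formula_eval b x y)
  end.

Fixpoint formula_vars_ok (n m : nat) (F : formula) : Prop :=
  match F with
  | FLeaf (Actual i) => (i < n)%nat
  | FLeaf (Guess j) => (j < m)%nat
  | FLeaf (NConst _) => True
  | FGate _ a b => formula_vars_ok n m a /\ formula_vars_ok n m b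
  end.

(** F nondeterministically computes f: f(x)=1 iff some guess y makes F output 1.
    (Guess inputs beyond y_{m-1} are never read when formula_vars_ok n m F.) *)
Definition nd_formula_computes (F : formula) (f : (nat -> bool) -> bool) : Prop :=
  forall x, f x = true <-> exists y, formula_eval F x y = true.

Definition log2 (x : R) : R := ln x / ln 2.

(* Main.v *)
Require Import Defs.
From Stdlib Require Import Reals List Arith Lia Lra Bool Classical.
Import ListNotations.

From Stdlib Require Import Reals List Arith Lia Lra Bool Classical.
Import ListNotations.
Open Scope R_scope.

Fixpoint gfold {A} (h : B2*node*node -> list A -> A) (gs : list (B2*node*node)) (acc : list A) : list A :=
  match gs with [] => acc | e :: gs' => gfold h gs' (acc ++ [h e acc]) end.

Lemma gfold_prefix {A} h gs (acc : list A) : exists t, gfold h gs acc = acc ++ t.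
Proof. revert acc; induction gs; intros; simpl. exists []; now rewrite app_nil_r.
 destruct (IHgs (acc ++ [h a acc])) as [t Ht]. rewrite Ht. exists (h a acc :: t). now rewrite <- app_assoc. Qed.

Lemma gfold_nth {A} h gs (acc : list A) k e : nth_error gs k = Some e ->
  nth_error (gfold h gs acc) (length acc + k) = Some (h e (firstn (length acc + k) (gfold h gs acc))).
Proof.
  revert acc k; induction gs as [|e0 gs IH]; intros acc k Hk; [destruct k; discriminate|].
  destruct k as [|k]; simpl in Hk.
  - inversion Hk; subst. simpl. destruct (gfold_prefix h gs (acc ++ [h e acc])) as [t Ht]. rewrite Ht.
    rewrite Nat.add_0_r. rewrite <- app_assoc. rewrite nth_error_app2 by lia. rewrite Nat.sub_diag. simpl.
    rewrite firstn_app, Nat.sub_diag, firstn_all. simpl. now rewrite app_nil_r.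
  - simpl. specialize (IH (acc ++ [h e0 acc]) k Hk). rewrite length_app in IH. simpl in IH.
    replace (length acc + S k)%nat with (length acc + 1 + k)%nat by lia. exact IH.
Qed.

Definition hv (x : nat -> bool) (e : B2*node*node) (acc : list bool) : bool :=
  let '(g,a,b) := e in g (node_val x acc a) (node_val x acc b).
Definition hd (e : B2*node*node) (acc : list nat) : nat :=
  let '(_,a,b) := e in S (Nat.max (node_depth acc a) (node_depth acc b)).

Lemma gva_gfold x gs acc : gate_vals_aux x gs acc = gfold (hv x) gs acc.
Proof. revert acc; induction gs as [|[[g a] b] gs IH]; intros; simpl; auto. Qed.
Lemma gda_gfold gs acc : gate_depths_aux gs acc = gfold hd gs acc.
Proof. revert acc; induction gs as [|[[g a] b] gs IH]; intros; simpl; auto. Qed.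

Definition DS (gs : list (B2*node*node)) := gate_depths_aux gs [].
Definition dep gs k := nth k (DS gs) 0%nat.
Definition VV x (gs : list (B2*node*node)) := gate_vals_aux x gs [].

Lemma node_val_firstn n x V k a : node_ok n k a -> node_val x (firstn k V) a = node_val x V a.
Proof. destruct a as [l|j]; simpl; auto. intros H. rewrite nth_firstn. apply Nat.ltb_lt in H. now rewrite H. Qed.
Lemma node_depth_firstn n V k a : node_ok n k a -> node_depth (firstn k V) a = node_depth V a.
Proof. destruct a as [l|j]; simpl; auto. intros H. rewrite nth_firstn. apply Nat.ltb_lt in H. now rewrite H. Qed.

Lemma val_eq n C x k g a b : circuit_wf n C -> nth_error (gates C) k = Some (g,a,b) ->
  nth k (VV x (gates C)) false = g (node_val x (VV x (gates C)) a) (node_val x (VV x (gates C)) b).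
Proof.
  intros [Hw _] Hk. destruct (Hw _ _ _ _ Hk) as [Ha Hb].
  pose proof (gfold_nth (hv x) (gates C) [] k _ Hk) as H. simpl in H.
  unfold VV. rewrite gva_gfold. apply nth_error_nth with (d:=false) in H. rewrite H. simpl.
  now rewrite (node_val_firstn _ _ _ _ _ Ha), (node_val_firstn _ _ _ _ _ Hb).
Qed.

Lemma dep_eq n C k g a b : circuit_wf n C -> nth_error (gates C) k = Some (g,a,b) ->
  dep (gates C) k = S (Nat.max (node_depth (DS (gates C)) a) (node_depth (DS (gates C)) b)).
Proof.
  intros [Hw _] Hk. destruct (Hw _ _ _ _ Hk) as [Ha Hb].
  pose proof (gfold_nth hd (gates C) [] k _ Hk) as H. simpl in H.
  unfold dep, DS. rewrite gda_gfold. apply nth_error_nth with (d:=0%nat) in H. rewrite H. simpl.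
  now rewrite (node_depth_firstn _ _ _ _ Ha), (node_depth_firstn _ _ _ _ Hb).
Qed.

From Stdlib Require Import Arith Lia Bool.
Open Scope nat_scope.
Definition inblk (jj ww du dv : nat) : bool :=
  (du / 2^jj <? dv / 2^jj) && (du / 2^(jj+ww) =? dv / 2^(jj+ww)).
Definition phi (jj ww d : nat) : nat := d mod 2^jj + 2^jj * (d / 2^(jj+ww)).

Lemma pow2_nz k : 2^k <> 0. Proof. apply Nat.pow_nonzero; lia. Qed.

Lemma phi_mono jj ww du dv : du < dv -> inblk jj ww du dv = false -> phi jj ww du < phi jj ww dv.
Proof.
  intros Hlt Hb. unfold inblk in Hb. unfold phi.
  pose proof (pow2_nz jj) as Hj. pose proof (pow2_nz (jj+ww)) as Hjw.
  assert (Hle1 : du / 2^(jj+ww) <= dv / 2^(jj+ww)) by (apply Nat.Div0.div_le_mono; lia).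
  assert (Hle2 : du / 2^jj <= dv / 2^jj) by (apply Nat.Div0.div_le_mono; lia).
  pose proof (Nat.mod_upper_bound du (2^jj) Hj).
  pose proof (Nat.mod_upper_bound dv (2^jj) Hj).
  destruct (Nat.eq_dec (du / 2^(jj+ww)) (dv / 2^(jj+ww))) as [He|Hne].
  - rewrite He. apply Nat.eqb_eq in He. rewrite He, andb_true_r in Hb. apply Nat.ltb_ge in Hb.
    assert (Hq : du / 2^jj = dv / 2^jj) by lia.
    pose proof (Nat.div_mod_eq du (2^jj)). pose proof (Nat.div_mod_eq dv (2^jj)). nia.
  - assert (du / 2^(jj+ww) + 1 <= dv / 2^(jj+ww)) by lia. nia.
Qed.

Lemma phi_lt jj ww d : phi jj ww d < 2^jj + d / 2^ww.
Proof.
  unfold phi. assert (2^jj <> 0) by (apply Nat.pow_nonzero; lia). assert (2^ww <> 0) by (apply Nat.pow_nonzero; lia).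
  pose proof (Nat.mod_upper_bound d (2^jj) ltac:(auto)).
  rewrite Nat.pow_add_r, (Nat.mul_comm (2^jj) (2^ww)), <- Nat.Div0.div_div.
  pose proof (Nat.Div0.mul_div_le (d / 2^ww) (2^jj)). lia.
Qed.

Lemma inblk_disj r i i' du dv : i < i' -> inblk (r*i) r du dv = true -> inblk (r*i') r du dv = false.
Proof.
  intros Hi H. unfold inblk in *. apply andb_true_iff in H as [_ H]. apply Nat.eqb_eq in H.
  replace (r*i') with ((r*i + r) + r*(i'-i-1)) by nia.
  rewrite Nat.pow_add_r, <- !Nat.Div0.div_div, H. rewrite Nat.ltb_irrefl. reflexivity.
Qed.

From Stdlib Require Import List Classical.
Import ListNotations.

Fixpoint sumto (B : nat) (c : nat -> nat) : nat := match B with 0 => 0 | S B' => sumto B' c + c B' end.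

Lemma sumto_zero B c : (forall i, i < B -> c i = 0) -> sumto B c = 0.
Proof. induction B; simpl; intros H; auto. rewrite IHB, H; auto. Qed.

Lemma sumto_add B a b : sumto B (fun i => a i + b i) = sumto B a + sumto B b.
Proof. induction B; simpl; lia. Qed.
Lemma sumto_mul B k c : sumto B (fun i => k * c i) = k * sumto B c.
Proof. induction B; simpl; lia. Qed.
Lemma sumto_ge B a c : (forall i, i < B -> a <= c i) -> B * a <= sumto B c.
Proof. induction B; simpl; intros H; auto. assert (a <= c B) by auto. assert (B * a <= sumto B c) by auto. lia. Qed.

Lemma sumto_ind_le1 {T} (p : nat -> T -> bool) B e :
  (forall i i', i < i' -> i' < B -> p i e = true -> p i' e = false) ->
  sumto B (fun i => if p i e then 1 else 0) <= 1.
Proof.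
  induction B; simpl; intros H; auto.
  destruct (p B e) eqn:E.
  - rewrite sumto_zero; auto. intros i Hi. destruct (p i e) eqn:E2; auto.
    rewrite (H i B Hi (le_n _) E2) in E. discriminate.
  - assert (sumto B (fun i => if p i e then 1 else 0) <= 1); [apply IHB; intros; apply (H i i'); auto|lia].
Qed.

Lemma disj_count {T} (p : nat -> T -> bool) B E :
  (forall i i' e, i < i' -> i' < B -> p i e = true -> p i' e = false) ->
  sumto B (fun i => length (filter (p i) E)) <= length E.
Proof.
  intros H. induction E as [|e E IH]; simpl.
  - rewrite sumto_zero; auto.
  - assert (Heq : sumto B (fun i => length (if p i e then e :: filter (p i) E else filter (p i) E))
       = sumto B (fun i => (if p i e then 1 else 0) + length (filter (p i) E))).
    { clear. induction B; simpl; auto. rewrite IHB. destruct (p B e); simpl; lia. }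
    rewrite Heq, sumto_add. pose proof (sumto_ind_le1 p B e (fun i i' => H i i' e)). lia.
Qed.

Lemma pigeon B c L : 1 <= B -> sumto B c <= L -> exists i, i < B /\ B * c i <= L.
Proof.
  intros HB Hs. apply NNPP. intros Hn.
  assert (Hall : forall i, i < B -> L + 1 <= B * c i).
  { intros i Hi. destruct (le_lt_dec (B * c i) L); [|lia]. exfalso; apply Hn; eauto. }
  pose proof (sumto_ge B (L+1) (fun i => B * c i) Hall). rewrite sumto_mul in H. nia.
Qed.

Lemma filter_orb_len {T} (p q : T -> bool) l :
  length (filter (fun u => p u || q u) l) <= length (filter p l) + length (filter q l).
Proof. induction l; simpl; auto. destruct (p a), (q a); simpl; lia. Qed.

Lemma filter_eq_notin s l : ~ In s l -> length (filter (fun u => u =? s) l) = 0.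
Proof. induction l; simpl; auto. intros H. destruct (Nat.eqb_spec a s). subst; tauto. auto. Qed.

Lemma filter_eq_le1 s l : NoDup l -> length (filter (fun u => u =? s) l) <= 1.
Proof.
  induction 1; simpl; auto. destruct (Nat.eqb_spec x s); simpl; auto.
  subst. rewrite filter_eq_notin; auto.
Qed.

Lemma count_mem (l S : list nat) : NoDup l ->
  length (filter (fun u => existsb (Nat.eqb u) S) l) <= length S.
Proof.
  intros Hl. induction S as [|s S IH]; simpl.
  - clear Hl; induction l; simpl; auto.
  - pose proof (filter_orb_len (fun u => u =? s) (fun u => existsb (Nat.eqb u) S) l).
    pose proof (filter_eq_le1 s l Hl). lia.
Qed.

From Stdlib Require Import Reals List Arith Lia Lra Bool Classical.
Import ListNotations.
Open Scope nat_scope.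

Definition dflt : B2*node*node := (fun _ _ => false, NIn (LConst false), NIn (LConst false)).

Fixpoint tr (gs : list (B2*node*node)) (cutf : nat -> bool) (idxf : nat -> nat) (f : nat) (v : node) {struct f} : formula :=
  match v with
  | NIn (LVar i) => FLeaf (Actual i)
  | NIn (LConst b) => FLeaf (NConst b)
  | NGate k => if cutf k then FLeaf (Guess (idxf k)) else
      match f with
      | 0 => FLeaf (NConst false)
      | S f' => let '(g,a,b) := nth k gs dflt in FGate g (tr gs cutf idxf f' a) (tr gs cutf idxf f' b)
      end
  end.

Lemma tr_size gs cutf idxf f v : formula_size (tr gs cutf idxf f v) <= 2^f - 1.
Proof.
  revert v; induction f; intros v; destruct v as [[i|b]|k]; simpl; try lia;
  destruct (cutf k); simpl; try lia.
  destruct (nth k gs dflt) as [[g a] b]. simpl.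
  pose proof (IHf a); pose proof (IHf b). pose proof (Nat.pow_nonzero 2 f ltac:(lia)). lia.
Qed.

Lemma nth_gate gs k : k < length gs -> exists g a b, nth_error gs k = Some (g,a,b) /\ nth k gs dflt = (g,a,b).
Proof.
  intros Hk. destruct (nth_error gs k) as [[[g a] b]|] eqn:E.
  - exists g, a, b. split; auto. now apply nth_error_nth.
  - apply nth_error_None in E; lia.
Qed.

Lemma node_ok_weak n k k' v : k <= k' -> node_ok n k v -> node_ok n k' v.
Proof. destruct v as [[i|b]|j]; simpl; auto; lia. Qed.

Lemma tr_vars n C cutf idxf m f v : circuit_wf n C ->
  (forall k, k < length (gates C) -> cutf k = true -> idxf k < m) ->
  node_ok n (length (gates C)) v -> formula_vars_ok n m (tr (gates C) cutf idxf f v).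
Proof.
  intros Hwf Hidx. revert v; induction f; intros v Hv; destruct v as [[i|b]|k]; simpl in *; auto;
  destruct (cutf k) eqn:Ec; simpl; auto; try (now apply Hidx).
  destruct (nth_gate (gates C) k Hv) as (g & a & b & Hn & Hn'). rewrite Hn'. simpl.
  destruct Hwf as [Hw _]. destruct (Hw _ _ _ _ Hn).
  split; apply IHf; apply (node_ok_weak n k); auto; lia.
Qed.

Lemma tr_sem n C x y cutf idxf (ph : nat -> nat) Dn U :
  circuit_wf n C ->
  (forall k g a b j, nth_error (gates C) k = Some (g,a,b) -> (a = NGate j \/ b = NGate j) ->
      dep (gates C) k <= Dn -> cutf j = false -> ph j < ph k) ->
  (forall w, w < U -> cutf w = true -> y (idxf w) = nth w (VV x (gates C)) false) ->
  forall f v, (forall k, v = NGate k -> k < U /\ k < length (gates C) /\ dep (gates C) k <= Dn /\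
                    (cutf k = false -> ph k < f)) ->
  formula_eval (tr (gates C) cutf idxf f v) x y = node_val x (VV x (gates C)) v.
Proof.
  intros Hwf Hm Hy f. induction f; intros v Hv; destruct v as [[i|b]|k]; simpl; auto;
  destruct (Hv k eq_refl) as (HU & Hs & HD & Hph);
  destruct (cutf k) eqn:Ec; simpl; auto; try (specialize (Hph eq_refl); lia).
  destruct (nth_gate (gates C) k Hs) as (g & a & b & Hn & Hn'). rewrite Hn'. simpl.
  rewrite (val_eq n C x k g a b Hwf Hn).
  pose proof (dep_eq n C k g a b Hwf Hn) as Hd.
  destruct Hwf as [Hw Ho]. destruct (Hw _ _ _ _ Hn) as [Ha Hb].
  specialize (Hph eq_refl).
  rewrite !IHf; auto.
  all: intros j ->; simpl in *; unfold node_depth in Hd; fold (dep (gates C) j) in Hd;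
    repeat split; try lia; intros Hcj; assert (ph j < ph k) by (eapply Hm; eauto); lia.
Qed.

From Stdlib Require Import Reals List Arith Lia Lra Bool Classical.
Import ListNotations.
Open Scope nat_scope.

Definition edges (gs : list (B2*node*node)) : list (node*nat) :=
  flat_map (fun k => let '(_,a,b) := nth k gs dflt in [(a,k);(b,k)]) (seq 0 (length gs)).
Definition goodE gs jj ww Dn (e : node*nat) : bool :=
  match fst e with
  | NGate u => inblk jj ww (dep gs u) (dep gs (snd e)) && (dep gs (snd e) <=? Dn)
  | NIn _ => false end.
Definition src (e : node*nat) : nat := match fst e with NGate u => u | NIn _ => 0 end.
Definition cutf gs jj ww Dn (u : nat) : bool :=
  existsb (Nat.eqb u) (map src (filter (goodE gs jj ww Dn) (edges gs))).
Definition idxf (cf : nat -> bool) (u : nat) : nat := length (filter cf (seq 0 u)).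

Lemma edges_len gs : length (edges gs) = 2 * length gs.
Proof.
  unfold edges. rewrite <- (length_seq (length gs) 0) at 2. generalize (seq 0 (length gs)) as l.
  intros l. induction l as [|z l IH]; simpl; auto.
  destruct (nth z gs dflt) as [[g x] y]. simpl. lia.
Qed.

Lemma edges_in gs k g a b : nth_error gs k = Some (g,a,b) -> In (a,k) (edges gs) /\ In (b,k) (edges gs).
Proof.
  intros H. assert (Hk : k < length gs) by (apply nth_error_Some; congruence).
  apply nth_error_nth with (d := dflt) in H.
  unfold edges; split; apply in_flat_map; exists k; split; try (apply in_seq; lia); rewrite H; simpl; auto.
Qed.

Lemma edges_inv gs v k : In (v,k) (edges gs) -> exists g a b, nth_error gs k = Some (g,a,b) /\ (v = a \/ v = b).
Proof.
  unfold edges. intros H. apply in_flat_map in H as [k' [Hk' Hin]]. apply in_seq in Hk'.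
  destruct (nth_gate gs k' ltac:(lia)) as (g & a & b & Hn & Hn'). rewrite Hn' in Hin.
  simpl in Hin. destruct Hin as [E|[E|[]]]; injection E as E1 E2; subst k'; exists g, a, b; split; auto.
Qed.

Lemma cut_spec gs jj ww Dn u : cutf gs jj ww Dn u = true ->
  exists k, In (NGate u, k) (edges gs) /\ goodE gs jj ww Dn (NGate u, k) = true.
Proof.
  unfold cutf. intros H. apply existsb_exists in H as [z [Hz Hu]]. apply Nat.eqb_eq in Hu. subst z.
  apply in_map_iff in Hz as [[v k] [Hs Hin]]. apply filter_In in Hin as [Hin Hg].
  destruct v as [l|u']; simpl in Hg, Hs. discriminate. subst. eauto.
Qed.

Lemma cut_intro gs jj ww Dn u k : In (NGate u, k) (edges gs) -> goodE gs jj ww Dn (NGate u, k) = true ->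
  cutf gs jj ww Dn u = true.
Proof.
  intros Hin Hg. unfold cutf. apply existsb_exists. exists u. split; [|apply Nat.eqb_refl].
  apply in_map_iff. exists (NGate u, k). split; auto. apply filter_In; auto.
Qed.

Lemma mono_cut n C jj ww Dn : circuit_wf n C ->
  forall k g a b j, nth_error (gates C) k = Some (g,a,b) -> (a = NGate j \/ b = NGate j) ->
      dep (gates C) k <= Dn -> cutf (gates C) jj ww Dn j = false ->
      phi jj ww (dep (gates C) j) < phi jj ww (dep (gates C) k).
Proof.
  intros Hwf k g a b j Hn Hab HD Hc.
  destruct (edges_in _ _ _ _ _ Hn) as [Ea Eb].
  assert (Ein : In (NGate j, k) (edges (gates C))) by (destruct Hab; subst; auto).
  assert (Hg : goodE (gates C) jj ww Dn (NGate j, k) = false).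
  { destruct (goodE (gates C) jj ww Dn (NGate j, k)) eqn:E; auto. rewrite (cut_intro _ _ _ _ _ _ Ein E) in Hc. discriminate. }
  unfold goodE in Hg. simpl in Hg. apply Nat.leb_le in HD. rewrite HD, andb_true_r in Hg.
  apply phi_mono; auto.
  pose proof (dep_eq n C k g a b Hwf Hn) as Hd.
  destruct Hab; subst; simpl in Hd; fold (dep (gates C) j) in Hd; lia.
Qed.

Lemma cut_props n C jj ww Dn u : circuit_wf n C -> cutf (gates C) jj ww Dn u = true ->
  u < length (gates C) /\ dep (gates C) u <= Dn.
Proof.
  intros Hwf Hc. destruct (cut_spec _ _ _ _ _ Hc) as [k [Hin Hg]].
  destruct (edges_inv _ _ _ Hin) as (g & a & b & Hn & Hab).
  assert (Hk : k < length (gates C)) by (apply nth_error_Some; congruence).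
  pose proof (dep_eq n C k g a b Hwf Hn) as Hd.
  destruct Hwf as [Hw _]. destruct (Hw _ _ _ _ Hn) as [Ha Hb].
  unfold goodE in Hg; simpl in Hg. apply andb_true_iff in Hg as [_ Hg]. apply Nat.leb_le in Hg.
  destruct Hab; subst; simpl in *; fold (dep (gates C) u) in Hd; lia.
Qed.

Lemma filter_seq_split (cf : nat -> bool) u s : u < s -> cf u = true ->
  filter cf (seq 0 s) = filter cf (seq 0 u) ++ u :: filter cf (seq (S u) (s - S u)).
Proof.
  intros Hu Hc. replace s with (u + (1 + (s - S u))) at 1 by lia.
  rewrite seq_app, filter_app. simpl. rewrite Hc. reflexivity.
Qed.

Definition check gs cf ix jj ww (u : nat) : formula :=
  let '(g,a,b) := nth u gs dflt in
  FGate Bool.eqb (FLeaf (Guess (ix u)))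
    (FGate g (tr gs cf ix (phi jj ww (dep gs u)) a) (tr gs cf ix (phi jj ww (dep gs u)) b)).

Definition chain (L : list nat) (ch : nat -> formula) (o : formula) : formula :=
  fold_right (fun u acc => FGate andb (ch u) acc) o L.

Lemma chain_eval L ch o x y : formula_eval (chain L ch o) x y = true <->
  (forall u, In u L -> formula_eval (ch u) x y = true) /\ formula_eval o x y = true.
Proof.
  induction L; simpl. firstorder.
  rewrite andb_true_iff, IHL. split.
  - intros [H1 [H2 H3]]. split; auto. intros u [->|Hu]; auto.
  - intros [H1 H2]. auto.
Qed.

Lemma chain_size L ch o M : (forall u, In u L -> formula_size (ch u) <= M) ->
  formula_size (chain L ch o) <= length L * (M + 1) + formula_size o.
Proof. induction L; simpl; intros H; auto. pose proof (H a (or_introl eq_refl)). specialize (IHL (fun u Hu => H u (or_intror Hu))). lia. Qed.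

Lemma chain_vars n m L ch o : (forall u, In u L -> formula_vars_ok n m (ch u)) -> formula_vars_ok n m o ->
  formula_vars_ok n m (chain L ch o).
Proof. induction L; simpl; intros H Ho; auto. Qed.

From Stdlib Require Import Reals List Arith Lia Lra Bool Classical.
Import ListNotations.
Open Scope nat_scope.

Lemma construct n C f jj ww Dn : circuit_wf n C -> circuit_computes C f -> circuit_depth C <= Dn ->
  exists m F, formula_vars_ok n m F /\ nd_formula_computes F f /\
    m <= length (filter (goodE (gates C) jj ww Dn) (edges (gates C))) /\
    formula_size F <= (m+1) * (2 * 2^(2^jj + Dn/2^ww) + 1).
Proof.
  intros Hwf Hcomp HD.
  set (gs := gates C). set (s := length gs). set (cf := cutf gs jj ww Dn). set (ix := idxf cf).
  set (cutl := filter cf (seq 0 s)).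
  set (P := 2^jj + Dn/2^ww).
  set (o := tr gs cf ix (S (phi jj ww (circuit_depth C))) (output C)).
  exists (length cutl), (chain cutl (check gs cf ix jj ww) o).
  assert (Hcp : forall u, cf u = true -> u < s /\ dep gs u <= Dn) by (intros; eapply cut_props; eauto).
  assert (Hix : forall u, u < s -> cf u = true -> ix u < length cutl).
  { intros u Hu Hc. unfold cutl, ix, idxf. rewrite (filter_seq_split cf u s Hu Hc), length_app. simpl. lia. }
  assert (HphP : forall d, d <= Dn -> phi jj ww d < P).
  { intros d Hd. pose proof (phi_lt jj ww d). assert (d / 2^ww <= Dn / 2^ww) by (apply Nat.Div0.div_le_mono; auto). unfold P; lia. }
  assert (Hmono := mono_cut n C jj ww Dn Hwf).
  pose proof Hwf as [Hw Ho].
  assert (Hcd : circuit_depth C = node_depth (DS gs) (output C)) by reflexivity.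
  split; [|split; [|split]].
  -
    apply chain_vars.
    + intros u Hu. unfold cutl in Hu. apply filter_In in Hu as [Hu Hc]. apply in_seq in Hu.
      unfold check. destruct (nth_gate gs u ltac:(lia)) as (g & a & b & Hn & Hn'). rewrite Hn'.
      destruct (Hw _ _ _ _ Hn) as [Ha Hb]. simpl. split; [apply Hix; auto; lia|].
      split; (apply tr_vars; [auto| intros k Hk Hck; apply Hix; auto | apply (node_ok_weak n u)]); auto; unfold s, gs in *; lia.
    + apply tr_vars; [auto| intros k Hk Hck; apply Hix; auto | auto].
  -
    intros x. set (V := VV x gs).
    assert (Hout : f x = node_val x V (output C)) by (rewrite <- Hcomp; reflexivity).
    assert (Hsem : forall y U fu v, (forall w, w < U -> cf w = true -> y (ix w) = nth w V false) ->
       (forall k, v = NGate k -> k < U /\ k < s /\ dep gs k <= Dn /\ (cf k = false -> phi jj ww (dep gs k) < fu)) ->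
       formula_eval (tr gs cf ix fu v) x y = node_val x V v).
    { intros y U fu v Hy Hv. eapply (tr_sem n C x y cf ix (fun k => phi jj ww (dep gs k)) Dn U Hwf); eauto. }
    assert (Hosem : forall y, (forall w, w < s -> cf w = true -> y (ix w) = nth w V false) ->
       formula_eval o x y = node_val x V (output C)).
    { intros y Hy. apply (Hsem y s); auto. intros k Hk. rewrite Hk in Ho, Hcd. simpl in Ho, Hcd. fold (dep gs k) in Hcd.
      unfold s, gs in *. repeat split; try lia. intros; rewrite Hcd; lia. }
    assert (Hcsem : forall y u, u < s -> cf u = true ->
       (forall w, w < u -> cf w = true -> y (ix w) = nth w V false) ->
       formula_eval (check gs cf ix jj ww u) x y = Bool.eqb (y (ix u)) (nth u V false)).
    { intros y u Hu Hc Hy. unfold check. destruct (nth_gate gs u Hu) as (g & a & b & Hn & Hn'). rewrite Hn'.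
      simpl. assert (Hval : nth u V false = g (node_val x V a) (node_val x V b)) by (apply (val_eq n C x u g a b Hwf Hn)).
      rewrite Hval.
      destruct (Hw _ _ _ _ Hn) as [Ha Hb]. pose proof (dep_eq n C u g a b Hwf Hn) as Hd. fold gs in Hd.
      destruct (Hcp u Hc) as [_ HDu].
      rewrite !(Hsem y u); auto.
      all: intros j ->; simpl in *; fold (dep gs j) in Hd; repeat split; try lia;
        intros Hcj; eapply Hmono; eauto. }
    split.
    + intros Hf.
      set (y := fun j => nth j (map (fun u => nth u V false) cutl) false).
      assert (Hy : forall w, w < s -> cf w = true -> y (ix w) = nth w V false).
      { intros w Hws Hc. unfold y, cutl, ix, idxf. rewrite (filter_seq_split cf w s Hws Hc), map_app.
        rewrite app_nth2; rewrite length_map; auto. rewrite Nat.sub_diag. reflexivity. }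
      exists y. apply chain_eval. split.
      * intros u Hu. unfold cutl in Hu. apply filter_In in Hu as [Hu Hc]. apply in_seq in Hu.
        rewrite Hcsem; auto; [|lia|intros; apply Hy; auto; lia]. rewrite Hy by (auto; lia). apply eqb_reflx.
      * rewrite Hosem; auto. congruence.
    + intros [y Hy]. apply chain_eval in Hy as [Hch Hoy].
      assert (Hg : forall u, u < s -> cf u = true -> y (ix u) = nth u V false).
      { intros u. induction u as [u IH] using (well_founded_induction lt_wf). intros Hu Hc.
        assert (Hin : In u cutl) by (apply filter_In; split; auto; apply in_seq; lia).
        specialize (Hch u Hin). rewrite Hcsem in Hch; auto.
        - now apply eqb_prop in Hch.
        - intros w Hw' Hcw. apply IH; auto; lia. }
      rewrite Hout, <- (Hosem y); auto.
  -
    unfold cutl, cf, cutf. eapply Nat.le_trans; [apply count_mem, seq_NoDup|]. rewrite length_map. lia.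
  -
    eapply Nat.le_trans; [apply chain_size with (M := 2 * 2^P)|].
    + intros u Hu. unfold cutl in Hu. apply filter_In in Hu as [Hu Hc]. apply in_seq in Hu.
      unfold check. destruct (nth_gate gs u ltac:(lia)) as (g & a & b & Hn & Hn'). rewrite Hn'. simpl.
      pose proof (tr_size gs cf ix (phi jj ww (dep gs u)) a). pose proof (tr_size gs cf ix (phi jj ww (dep gs u)) b).
      destruct (Hcp u Hc) as [_ HDu]. pose proof (HphP _ HDu).
      assert (2^(phi jj ww (dep gs u)) <= 2^P) by (apply Nat.pow_le_mono_r; lia).
      pose proof (Nat.pow_nonzero 2 (phi jj ww (dep gs u)) ltac:(lia)). lia.
    + pose proof (tr_size gs cf ix (S (phi jj ww (circuit_depth C))) (output C)). fold o in H.
      pose proof (HphP _ HD).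
      assert (2^(S (phi jj ww (circuit_depth C))) <= 2 * 2^P) by (rewrite Nat.pow_succ_r'; apply Nat.mul_le_mono_l, Nat.pow_le_mono_r; lia).
      nia.
Qed.

From Stdlib Require Import Reals List Arith Lia Lra Bool Classical.
Import ListNotations.
Open Scope R_scope.

Lemma least_nat (P : nat -> Prop) N : P N -> exists B, P B /\ forall k, (k < B)%nat -> ~ P k.
Proof.
  induction N as [N IH] using (well_founded_induction lt_wf). intros HN.
  destruct (classic (exists k, (k < N)%nat /\ P k)) as [[k [Hk Pk]]|Hno].
  - exact (IH k Hk Pk).
  - exists N. split; auto. intros k Hk Pk. apply Hno; eauto.
Qed.

Lemma INR2 : INR 2 = 2. Proof. simpl; lra. Qed.

Lemma ln_pow2 k : ln (INR (2^k)) = INR k * ln 2.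
Proof. rewrite pow_INR, INR2. apply ln_pow; lra. Qed.

Lemma INR_sz m k : INR ((m+1)*(2*k+1)) = (INR m + 1)*(2*INR k + 1).
Proof. rewrite mult_INR, !plus_INR, mult_INR. simpl. lra. Qed.

Lemma inblk00 du dv : inblk 0 0 du dv = false.
Proof. unfold inblk. rewrite Nat.add_0_r, Nat.pow_0_r, !Nat.div_1_r. destruct (Nat.ltb_spec du dv), (Nat.eqb_spec du dv); auto; lia. Qed.

Lemma filter_nil {T} (p : T -> bool) l : (forall e, p e = false) -> filter p l = [].
Proof. induction l; simpl; intros H; auto. rewrite H; auto. Qed.

Theorem theorem4 :
  forall c1 c2 eps : R, 0 < c1 -> 0 < c2 -> 0 < eps ->
  exists K : R,
    forall (n : nat), (3 <= n)%nat ->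
    forall (C : circuit) (f : (nat -> bool) -> bool),
      circuit_wf n C ->
      INR (circuit_size C) <= c1 * INR n ->
      INR (circuit_depth C) <= c2 * log2 (INR n) ->
      circuit_computes C f ->
      exists (m : nat) (F : formula),
        formula_vars_ok n m F /\
        INR m <= K * INR n / log2 (log2 (INR n)) /\
        INR (formula_size F) <= K * Rpower (INR n) (1 + eps) /\
        nd_formula_computes F f.
Proof.
  intros c1 c2 eps Hc1 Hc2 Heps.
  destruct (INR_unbounded (4*c2/eps)) as [N0 HN0].
  set (r := S N0).
  assert (Hr : 4*c2/eps <= INR (2^r)).
  { pose proof (Nat.pow_gt_lin_r 2 r ltac:(lia)). apply lt_INR in H. unfold r in H. rewrite S_INR in H. unfold r. lra. }
  assert (Hr' : 4*c2 <= INR (2^r) * eps).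
  { apply Rmult_le_compat_r with (r := eps) in Hr; [|lra]. unfold Rdiv in Hr. rewrite Rmult_assoc, Rinv_l, Rmult_1_r in Hr; lra. }
  set (a := Rabs (ln c2 / ln 2)).
  set (Q := INR (2^(2^r))).
  assert (HQ : 1 <= Q). { unfold Q. replace 1 with (INR 1) by reflexivity. apply le_INR. pose proof (Nat.pow_nonzero 2 (2^r)). lia. }
  assert (Ha : 0 <= a) by apply Rabs_pos.
  assert (Hrpos : 0 <= INR r) by apply pos_INR.
  set (K2 := 2*c1*(2*INR r + a)).
  assert (HK2 : 0 <= K2) by (unfold K2; apply Rmult_le_pos; lra).
  set (K3 := (2*c1+1)*(2*Q+1)).
  exists (K2 + K3).
  intros n Hn C f Hwf Hs Hd Hcomp.
  set (lam := log2 (INR n)). fold lam in Hd.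
  assert (Hln2 : 0 < ln 2) by (pose proof ln_lt_2; lra).
  assert (Hn3 : 3 <= INR n) by (replace 3 with (INR 3) by (simpl; lra); apply le_INR; auto).
  assert (Hlnn : ln 2 < ln (INR n)) by (apply ln_increasing; lra).
  assert (Hlam1 : 1 < lam).
  { unfold lam, log2. apply Rmult_lt_reg_r with (ln 2); auto. unfold Rdiv. rewrite Rmult_assoc, Rinv_l, Rmult_1_r; lra. }
  assert (Hll : 0 < log2 lam).
  { unfold log2. apply Rdiv_lt_0_compat; auto. rewrite <- ln_1. apply ln_increasing; lra. }
  assert (Hlamln : lam * ln 2 = ln (INR n)) by (unfold lam, log2; field; lra).
  set (ne := Rpower (INR n) eps).
  assert (Hne : 1 <= ne).
  { unfold ne. rewrite <- (Rpower_O (INR n)) by lra. apply Rle_Rpower; lra. }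
  assert (Hpow : Rpower (INR n) (1+eps) = INR n * ne).
  { unfold ne. rewrite Rpower_plus, Rpower_1; lra. }
  assert (Hkey : forall P : nat, INR P <= eps*lam -> INR (2^P) <= ne).
  { intros P HP. rewrite pow_INR, INR2, <- Rpower_pow by lra. unfold ne, Rpower.
    assert (HL : INR P * ln 2 <= eps * ln (INR n)).
    { rewrite <- Hlamln. apply Rmult_le_compat_r with (r := ln 2) in HP; lra. }
    destruct HL as [HL|HL]; [left; apply exp_increasing; auto|rewrite HL; lra]. }
  assert (Hfin : forall m F, formula_vars_ok n m F -> nd_formula_computes F f ->
            INR m * log2 lam <= K2 * INR n -> INR m <= 2*c1*INR n ->
            INR (formula_size F) <= (INR m + 1) * (2*Q*ne + 1) ->
            exists (m : nat) (F : formula),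
              formula_vars_ok n m F /\ INR m <= (K2 + K3) * INR n / log2 lam /\
              INR (formula_size F) <= (K2 + K3) * Rpower (INR n) (1 + eps) /\ nd_formula_computes F f).
  { intros m F Hv Hc Hm1 Hm2 Hsz. exists m, F. split; [auto|split; [|split; auto]].
    - apply Rmult_le_reg_r with (log2 lam); auto. unfold Rdiv.
      rewrite Rmult_assoc, Rinv_l, Rmult_1_r by lra.
      assert (0 <= K3 * INR n). { unfold K3. apply Rmult_le_pos; [|apply pos_INR]. apply Rmult_le_pos; lra. }
      lra.
    - rewrite Hpow. pose proof (pos_INR m) as Hm0.
      assert (H1 : (INR m + 1) * (2*Q*ne + 1) <= (2*c1*INR n + 1) * (2*Q*ne+1)).
      { apply Rmult_le_compat_r; [|lra]. assert (0 <= Q*ne) by (apply Rmult_le_pos; lra). lra. }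
      assert (H2 : (2*c1*INR n + 1) * (2*Q*ne+1) <= K3 * (INR n * ne)).
      { unfold K3. assert (1 <= INR n) by lra.
        assert (HA : 2*c1*INR n + 1 <= (2*c1+1) * INR n) by nra.
        assert (HB : 2*Q*ne + 1 <= (2*Q+1) * ne) by nra.
        assert (0 <= 2*c1*INR n + 1) by nra. assert (0 <= 2*Q*ne+1) by nra.
        apply Rle_trans with (((2*c1+1) * INR n) * ((2*Q+1) * ne)).
        - apply Rmult_le_compat; auto.
        - lra. }
      assert (0 <= K2 * (INR n * ne)).
      { unfold K2. apply Rmult_le_pos; [apply Rmult_le_pos; lra|]. apply Rmult_le_pos; [apply pos_INR|lra]. }
      lra. }
  destruct (INR_unbounded (c2*lam)) as [N HN].
  assert (HPN : c2 * lam < INR (2^(r*(N+1)))).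
  { pose proof (Nat.pow_gt_lin_r 2 (N+1) ltac:(lia)).
    assert (2^(N+1) <= 2^(r*(N+1)))%nat by (apply Nat.pow_le_mono_r; unfold r; lia).
    assert (N < 2^(r*(N+1)))%nat by lia. apply lt_INR in H1. lra. }
  destruct (least_nat (fun B => c2 * lam < INR (2^(r*(B+1)))) N HPN) as [B [HB Hmin]].
  set (Dn := circuit_depth C). fold Dn in Hd.
  set (gs := gates C).
  destruct B as [|B'].
  -
    destruct (construct n C f 0 0 Dn Hwf Hcomp (le_n _)) as (m & F & Hv & Hc & Hm & Hsz).
    rewrite filter_nil in Hm; [|intros e; unfold goodE; destruct (fst e); auto; rewrite inblk00; auto].
    simpl in Hm. assert (m = 0%nat) by lia. subst m.
    apply Hfin with 0%nat F; auto.
    + simpl. pose proof (pos_INR n). nra.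
    + simpl. pose proof (pos_INR n). nra.
    + simpl length in Hsz. replace (2^0)%nat with 1%nat in Hsz by reflexivity. rewrite Nat.div_1_r in Hsz.
      assert (HDr : (Dn < 2^r)%nat). { apply INR_lt. replace (r * (0+1))%nat with r in HB by lia. lra. }
      assert (H2 : (2^(1+Dn) <= 2^(2^r))%nat) by (apply Nat.pow_le_mono_r; lia).
      apply le_INR in Hsz. apply le_INR in H2. fold Q in H2.
      rewrite ?mult_INR, ?plus_INR in Hsz. change (INR 0) with 0 in *. change (INR 1) with 1 in *. assert (E2 : INR (2 * 2^(1+Dn)) = 2 * INR (2^(1+Dn))) by (rewrite mult_INR; simpl; lra). rewrite E2 in Hsz.
      assert (0 <= Q * (ne - 1)) by (apply Rmult_le_pos; lra).
      lra.
  - set (B := S B').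
    set (E := edges gs).
    set (c := fun i => length (filter (goodE gs (r*i) r Dn) E)).
    assert (Hsum : (sumto B c <= length E)%nat).
    { apply disj_count. intros i i' e Hii' _ H. unfold goodE in *. destruct (fst e) as [l|u]; auto.
      apply andb_true_iff in H as [H _]. rewrite (inblk_disj r i i' _ _ Hii' H). reflexivity. }
    unfold E in Hsum. rewrite edges_len in Hsum.
    destruct (pigeon B c _ ltac:(unfold B; lia) Hsum) as [I [HI HBc]].
    destruct (construct n C f (r*I) r Dn Hwf Hcomp (le_n _)) as (m & F & Hv & Hc & Hm & Hsz).
    fold gs in Hm. assert (HBm : (B * m <= 2 * length gs)%nat) by (unfold c, E in HBc; nia).
    apply le_INR in HBm. rewrite !mult_INR in HBm. fold gs in Hs. unfold circuit_size in Hs. fold gs in Hs.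
    simpl (INR 2) in HBm.
    assert (HBpos : 1 <= INR B) by (replace 1 with (INR 1) by reflexivity; apply le_INR; unfold B; lia).
    pose proof (pos_INR m) as Hm0.
    assert (HBm' : INR B * INR m <= 2*c1*INR n) by lra.
    apply Hfin with m F; auto.
    +
      assert (Hlog : log2 lam <= INR r * (INR B + 1) + a).
      { assert (Hl : ln (c2*lam) < INR (r*(B+1)) * ln 2).
        { rewrite <- ln_pow2. apply ln_increasing; auto. apply Rmult_lt_0_compat; lra. }
        rewrite ln_mult in Hl by lra. rewrite mult_INR, plus_INR in Hl. simpl (INR 1) in Hl.
        unfold log2. apply Rmult_le_reg_r with (ln 2); auto. unfold Rdiv.
        rewrite Rmult_assoc, Rinv_l, Rmult_1_r by lra.
        assert (Hab : - (ln c2 / ln 2) <= a) by (unfold a; rewrite <- Rabs_Ropp; apply Rle_abs).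
        assert (- ln c2 <= a * ln 2).
        { apply Rmult_le_compat_r with (r := ln 2) in Hab; [|lra]. unfold Rdiv in Hab.
          rewrite Ropp_mult_distr_l, Rmult_assoc, Rinv_l, Rmult_1_r in Hab; lra. }
        rewrite Rmult_plus_distr_r. lra. }
      assert (Hlog2 : log2 lam <= (2*INR r + a) * INR B) by nra.
      apply Rle_trans with (INR m * ((2*INR r + a) * INR B)).
      * apply Rmult_le_compat_l; lra.
      * unfold K2. nra.
    + nra.
    +
      set (P := (2^(r*I) + Dn/2^r)%nat) in Hsz.
      assert (HP : INR P <= eps * lam).
      { assert (Hmin' : INR (2^(r*B)) <= c2 * lam).
        { destruct (Rle_lt_dec (INR (2^(r*B))) (c2*lam)) as [H|H]; auto. exfalso.
          apply (Hmin B'); [unfold B; lia|]. replace (r*(B'+1))%nat with (r*B)%nat by (unfold B; lia). exact H. }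
        assert (H1 : (2^(r*I) * 2^r <= 2^(r*B))%nat).
        { rewrite <- Nat.pow_add_r. apply Nat.pow_le_mono_r; nia. }
        assert (H2 : (2^r * (Dn/2^r) <= Dn)%nat) by (apply Nat.Div0.mul_div_le).
        apply le_INR in H1, H2. rewrite mult_INR in H1, H2.
        assert (HPr : INR P * INR (2^r) <= 2 * c2 * lam).
        { unfold P. rewrite plus_INR. lra. }
        assert (0 <= INR P) by apply pos_INR.
        assert (0 < INR (2^r)) by (apply lt_0_INR; apply Nat.neq_0_lt_0, Nat.pow_nonzero; lia).
        assert (INR P * (4*c2) <= 2*c2*lam*eps) by nra.
        nra. }
      pose proof (Hkey P HP) as H2P.
      apply le_INR in Hsz. rewrite INR_sz in Hsz.
      apply Rle_trans with (1 := Hsz). apply Rmult_le_compat_l; [lra|].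
      assert (ne <= Q * ne) by nra. lra.
Qed.
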